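(* Let $-D/2\le x_C<x_B\le D/2$, let $(\bar r_1^{BC},\bar r_2^{BC})$ be the unique intersection point of the boundary curves of $\mathcal{C}_f(x_B)$ and $\mathcal{C}_f(x_C)$, and let $(\bar r_1^B,\bar r_2^B)\in\partial\mathcal{C}_f(x_B)$ and $(\bar r_1^C,\bar r_2^C)\in\partial\mathcal{C}_f(x_C)$ be the points at which the upper-right common tangent line $\ell$ of the convex hull of $\mathcal{C}_f(x_B)\cup\mathcal{C}_f(x_C)$ touches the boundaries of $\mathcal{C}_f(x_B)$ and $\mathcal{C}_f(x_C)$, respectively. Then $0\le\bar r_1^B<\bar r_1^{BC}<\bar r_1^C$ and $0\le\bar r_2^C<\bar r_2^{BC}<\bar r_2^B$.
   Context: Fix $D>0$, $H>0$, $\beta_0>0$, $\bar P>0$. Ground users GU 1, GU 2 are at horizontal positions $x_1=-D/2$, $x_2=D/2$; for a UAV at horizontal position $x$ (altitude $H$), $h_k(x)=\beta_0/((x-x_k)^2+H^2)$. For $p_1,p_2\ge0$, $\mathcal{C}_{\rm MAC}(x,p_1,p_2)$ is the set of $(r_1,r_2)$, $r_1,r_2\ge0$, with $r_1\le\log_2(1+p_1h_1(x))$, $r_2\le\log_2(1+p_2h_2(x))$, $r_1+r_2\le\log_2(1+p_1h_1(x)+p_2h_2(x))$; the fixed-location capacity region is $\mathcal{C}_f(x)=\bigcup_{p_1,p_2\ge0,\,p_1+p_2\le\bar P}\mathcal{C}_{\rm MAC}(x,p_1,p_2)$. For $m\in\{B,C\}$, the boundary curve of $\mathcal{C}_f(x_m)$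 is $r_2^m(r_1)=\max\{r_2:(r_1,r_2)\in\mathcal{C}_f(x_m)\}$ for $0\le r_1\le\log_2(1+\bar Ph_1(x_m))$; the two curves $r_2^B$ and $r_2^C$ intersect at exactly one point, denoted $(\bar r_1^{BC},\bar r_2^{BC})$. *)

(* Defs.v *)
From Stdlib Require Import Reals.
Open Scope R_scope.

Definition log2 (y : R) : R := ln y / ln 2.

Definition gain (beta0 H xk x : R) : R := beta0 / ((x - xk) ^ 2 + H ^ 2).
Definition h1 (D H beta0 x : R) : R := gain beta0 H (- D / 2) x.
Definition h2 (D H beta0 x : R) : R := gain beta0 H (D / 2) x.

Definition C_MAC (D H beta0 x p1 p2 r1 r2 : R) : Prop :=
  0 <= r1 /\ 0 <= r2 /\
  r1 <= log2 (1 + p1 * h1 D H beta0 x) /\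
  r2 <= log2 (1 + p2 * h2 D H beta0 x) /\
  r1 + r2 <= log2 (1 + p1 * h1 D H beta0 x + p2 * h2 D H beta0 x).

Definition C_f (D H beta0 P x r1 r2 : R) : Prop :=
  exists p1 p2, 0 <= p1 /\ 0 <= p2 /\ p1 + p2 <= P /\ C_MAC D H beta0 x p1 p2 r1 r2.

Definition boundary_pt (D H beta0 P x r1 r2 : R) : Prop :=
  0 <= r1 <= log2 (1 + P * h1 D H beta0 x) /\
  C_f D H beta0 P x r1 r2 /\
  (forall r2', C_f D H beta0 P x r1 r2' -> r2' <= r2).

(* Main.v *)
Require Import Defs.
From Stdlib Require Import Reals Lra Psatz.
Open Scope R_scope.

Lemma ln2_pos : 0 < ln 2.
Proof. pose proof ln_lt_2; lra. Qed.

Definition E (r : R) : R := exp (r * ln 2) - 1.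

Lemma log2_E r : log2 (1 + E r) = r.
Proof. unfold log2, E. replace (1 + (exp (r * ln 2) - 1)) with (exp (r * ln 2)) by ring.
  rewrite ln_exp. field. pose proof ln2_pos; lra. Qed.

Lemma E_log2 u : -1 < u -> E (log2 (1 + u)) = u.
Proof. intro h. unfold log2, E. replace (ln (1 + u) / ln 2 * ln 2) with (ln (1+u)).
  rewrite exp_ln; lra. field. pose proof ln2_pos; lra. Qed.

Lemma E_gt r : -1 < E r.
Proof. unfold E. pose proof (exp_pos (r * ln 2)). lra. Qed.

Lemma E_lt r r' : r < r' -> E r < E r'.
Proof. intro h. unfold E. pose proof ln2_pos.
  assert (r * ln 2 < r' * ln 2) by nra. pose proof (exp_increasing _ _ H0). lra. Qed.

Lemma E_le r r' : r <= r' -> E r <= E r'.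
Proof. intro h. destruct h. apply Rlt_le, E_lt; auto. subst; lra. Qed.

Lemma E_lt_rev r r' : E r < E r' -> r < r'.
Proof. intro h. destruct (Rlt_or_le r r'); auto. apply E_le in H. lra. Qed.

Lemma E_le_rev r r' : E r <= E r' -> r <= r'.
Proof. intro h. destruct (Rle_or_lt r r'); auto. apply E_lt in H. lra. Qed.

Lemma E_0 : E 0 = 0.
Proof. unfold E. rewrite Rmult_0_l, exp_0. ring. Qed.

Lemma E_nonneg r : 0 <= r -> 0 <= E r.
Proof. intro h. rewrite <- E_0. apply E_le; auto. Qed.

Lemma E_add r1 r2 : 1 + E (r1 + r2) = (1 + E r1) * (1 + E r2).
Proof. unfold E. rewrite Rmult_plus_distr_r, exp_plus. ring. Qed.

Lemma le_log2 r y : 0 < y -> r <= log2 y -> 1 + E r <= y.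
Proof. intros hy h. rewrite <- (exp_ln y) by auto. unfold E.
  replace (1 + (exp (r * ln 2) - 1)) with (exp (r * ln 2)) by ring.
  unfold log2 in h. pose proof ln2_pos.
  assert (r * ln 2 <= ln y).
  { apply (Rmult_le_compat_r (ln 2)) in h; [|lra].
    replace (ln y / ln 2 * ln 2) with (ln y) in h by (field; lra). lra. }
  destruct H0. apply Rlt_le, exp_increasing; auto. rewrite H0; lra. Qed.

Lemma log2_le y y' : 0 < y -> y <= y' -> log2 y <= log2 y'.
Proof. intros. unfold log2. pose proof ln2_pos. apply Rmult_le_compat_r.
  apply Rlt_le, Rinv_0_lt_compat; auto. destruct H0. apply Rlt_le, ln_increasing; auto. subst; lra. Qed.

Lemma log2_lt y y' : 0 < y -> y < y' -> log2 y < log2 y'.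
Proof. intros. unfold log2. pose proof ln2_pos. apply Rmult_lt_compat_r.
  apply Rinv_0_lt_compat; auto. apply ln_increasing; auto. Qed.

Lemma log2_1 : log2 1 = 0.
Proof. unfold log2. rewrite ln_1. unfold Rdiv; ring. Qed.

Lemma log2_nonneg u : 0 <= u -> 0 <= log2 (1 + u).
Proof. intro. rewrite <- log2_1. apply log2_le; lra. Qed.

Lemma log2_mult y y' : 0 < y -> 0 < y' -> log2 (y * y') = log2 y + log2 y'.
Proof. intros. unfold log2. rewrite ln_mult; auto. unfold Rdiv; ring. Qed.

Lemma le_div v N s : 0 < s -> v * s <= N -> v <= N / s.
Proof. intros. apply (Rmult_le_reg_r s); auto. replace (N / s * s) with N by (field; lra). lra. Qed.

Definition Reg (a b P r1 r2 : R) : Prop :=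
  exists p1 p2, 0 <= p1 /\ 0 <= p2 /\ p1 + p2 <= P /\
  (0 <= r1 /\ 0 <= r2 /\ r1 <= log2 (1 + p1 * a) /\ r2 <= log2 (1 + p2 * b) /\
   r1 + r2 <= log2 (1 + p1 * a + p2 * b)).

Definition phi (a b P u : R) : R := (P - u / a) / (1 / b + u / Rmax a b).

Lemma Rmax_pos a b : 0 < a -> 0 < Rmax a b.
Proof. intros. pose proof (Rmax_l a b). lra. Qed.

Lemma nec a b P r1 r2 : 0 < a -> 0 < b -> Reg a b P r1 r2 ->
  0 <= r1 /\ 0 <= r2 /\ E r2 <= phi a b P (E r1) /\ E r1 <= P * a.
Proof.
  intros ha hb [p1 [p2 [hp1 [hp2 [hp [h1 [h2 [h3 [h4 h5]]]]]]]]].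
  apply le_log2 in h3; [|nra]. apply le_log2 in h4; [|nra]. apply le_log2 in h5; [|nra].
  rewrite E_add in h5.
  pose proof (E_nonneg _ h1) as hu. pose proof (E_nonneg _ h2) as hv.
  set (u := E r1) in *. set (v := E r2) in *.
  split; [lra|]. split; [lra|]. split; [| nra].
  unfold phi. pose proof (Rmax_pos a b ha) as hm.
  apply le_div. apply Rplus_lt_le_0_compat. apply Rdiv_lt_0_compat; lra.
  apply Rmult_le_pos; [lra| apply Rlt_le, Rinv_0_lt_compat; lra].
  assert (u / a + v / b + u * v / Rmax a b <= P).
  { unfold Rmax. destruct (Rle_dec a b).
    -
      assert (a*(u+v+u*v) <= a*(p1*a+p2*b)) by nra.
      assert ((b-a)*(p1*a-u) >= 0) by (apply Rle_ge, Rmult_le_pos; lra).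
      assert (a*b*(P-p1-p2) >= 0) by (apply Rle_ge, Rmult_le_pos; nra).
      assert (u*b + v*a + u*v*a <= P*a*b) by nra.
      apply (Rmult_le_reg_r (a*b)). nra.
      replace ((u / a + v / b + u * v / b) * (a * b)) with (u*b + v*a + u*v*a) by (field; lra).
      lra.
    - assert (b*(u+v+u*v) <= b*(p1*a+p2*b)) by nra.
      assert ((a-b)*(p2*b-v) >= 0) by (apply Rle_ge, Rmult_le_pos; lra).
      assert (a*b*(P-p1-p2) >= 0) by (apply Rle_ge, Rmult_le_pos; nra).
      assert (u*b + v*a + u*v*b <= P*a*b) by nra.
      apply (Rmult_le_reg_r (a*b)). nra.
      replace ((u / a + v / b + u * v / a) * (a * b)) with (u*b + v*a + u*v*b) by (field; lra).
      lra. }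
  replace (v * (1 / b + u / Rmax a b)) with (v/b + u*v/Rmax a b) by (field; lra). lra.
Qed.

Lemma phi_eq a b P u : 0 < a -> 0 < b -> 0 <= u ->
  phi a b P u * (1 / b + u / Rmax a b) = P - u / a.
Proof. intros. unfold phi. pose proof (Rmax_pos a b H).
  assert (0 < 1/b + u / Rmax a b).
  { apply Rplus_lt_le_0_compat. apply Rdiv_lt_0_compat; lra.
    apply Rmult_le_pos; [lra| apply Rlt_le, Rinv_0_lt_compat; lra]. }
  field; repeat split; nra. Qed.

Lemma phi_nonneg a b P u : 0 < a -> 0 < b -> 0 <= u -> u <= P * a -> 0 <= phi a b P u.
Proof. intros. unfold phi. pose proof (Rmax_pos a b H).
  assert (0 < 1/b + u / Rmax a b).
  { apply Rplus_lt_le_0_compat. apply Rdiv_lt_0_compat; lra.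
    apply Rmult_le_pos; [lra| apply Rlt_le, Rinv_0_lt_compat; lra]. }
  apply Rmult_le_pos; [| apply Rlt_le, Rinv_0_lt_compat; lra].
  assert (u / a <= P). { apply (Rmult_le_reg_r a); auto. replace (u/a*a) with u by (field; repeat split; nra). lra. }
  lra. Qed.

Lemma suf a b P u : 0 < a -> 0 < b -> 0 <= u -> u <= P * a ->
  Reg a b P (log2 (1 + u)) (log2 (1 + phi a b P u)).
Proof.
  intros ha hb hu hua.
  pose proof (phi_nonneg a b P u ha hb hu hua) as hv.
  pose proof (phi_eq a b P u ha hb hu) as he.
  set (v := phi a b P u) in *.
  unfold Rmax in he. destruct (Rle_dec a b).
  - exists (u / a), (v * (1 + u) / b).
    assert (P = u/a + v*(1+u)/b) by (rewrite <- (Rplus_0_r P); rewrite <- (Rminus_diag_eq (u/a) (u/a)) by reflexivity;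
       replace (P + (u/a - u/a)) with (v * (1 / b + u / b) + u/a) by lra; field; repeat split; nra).
    split. apply Rmult_le_pos; [lra| apply Rlt_le, Rinv_0_lt_compat; lra].
    split. apply Rmult_le_pos; [nra| apply Rlt_le, Rinv_0_lt_compat; lra].
    split. lra.
    split. apply log2_nonneg; lra. split. apply log2_nonneg; lra.
    split. right. f_equal. field. lra.
    split. apply log2_le. lra. replace (v * (1 + u) / b * b) with (v*(1+u)) by (field; repeat split; nra). nra.
    rewrite <- log2_mult by lra. right. f_equal. field. lra.
  - exists (u * (1 + v) / a), (v / b).
    assert (P = u*(1+v)/a + v/b) by (
       replace P with (v * (1 / b + u / a) + u/a) by lra; field; repeat split; nra).
    split. apply Rmult_le_pos; [nra| apply Rlt_le, Rinv_0_lt_compat; lra].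
    split. apply Rmult_le_pos; [lra| apply Rlt_le, Rinv_0_lt_compat; lra].
    split. lra.
    split. apply log2_nonneg; lra. split. apply log2_nonneg; lra.
    split. apply log2_le. lra. replace (u * (1 + v) / a * a) with (u*(1+v)) by (field; repeat split; nra). nra.
    split. right. f_equal. field. lra.
    rewrite <- log2_mult by lra. right. f_equal. field. lra.
Qed.

Lemma phi_decr a b P u u' : 0 <= P -> 0 < a -> 0 < b -> 0 <= u -> u < u' -> phi a b P u' < phi a b P u.
Proof. intros hP. intros. unfold phi. pose proof (Rmax_pos a b H). set (m := Rmax a b) in *.
  assert (0 < 1/b + u / m).
  { apply Rplus_lt_le_0_compat. apply Rdiv_lt_0_compat; lra.
    apply Rmult_le_pos; [lra| apply Rlt_le, Rinv_0_lt_compat; lra]. }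
  assert (0 < 1/b + u' / m).
  { apply Rplus_lt_le_0_compat. apply Rdiv_lt_0_compat; lra.
    apply Rmult_le_pos; [lra| apply Rlt_le, Rinv_0_lt_compat; lra]. }
  assert ((P - u/a)*(1/b+u'/m) - (P - u'/a)*(1/b+u/m) = (u'-u)*(P/m + 1/(a*b))) by (field; repeat split; nra).
  assert (0 < P/m + 1/(a*b)).
  { apply Rplus_le_lt_0_compat. apply Rmult_le_pos; [lra| apply Rlt_le, Rinv_0_lt_compat; lra].
    apply Rdiv_lt_0_compat; nra. }
  apply (Rmult_lt_reg_r ((1/b+u/m)*(1/b+u'/m))). nra.
  replace ((P - u' / a) / (1 / b + u' / m) * ((1 / b + u / m) * (1 / b + u' / m))) with
    ((P - u'/a)*(1/b+u/m)) by (field; repeat split; nra).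
  replace ((P - u / a) / (1 / b + u / m) * ((1 / b + u / m) * (1 / b + u' / m))) with
    ((P - u/a)*(1/b+u'/m)) by (field; repeat split; nra).
  nra.
Qed.

Definition phi' (a b m P u : R) : R := (P - u / a) / (1 / b + u / m).

Lemma inv_pos x : 0 < x -> 0 < / x.
Proof. apply Rinv_0_lt_compat. Qed.

Lemma cross aB bB mB aC bC mC P u0 :
  0 < aB -> 0 < bB -> 0 < mB -> 0 < aC -> 0 < bC -> 0 < mC -> 0 < P ->
  aB < aC -> bC < bB -> 0 <= u0 -> u0 <= P * aB ->
  phi' aB bB mB P u0 = phi' aC bC mC P u0 ->
  0 < u0 /\ u0 < P * aB /\
  (forall u, 0 <= u -> u < u0 -> phi' aC bC mC P u < phi' aB bB mB P u) /\
  (forall u, u0 < u -> u <= P * aB -> phi' aB bB mB P u < phi' aC bC mC P u) /\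
  (1 / aB + phi' aB bB mB P u0 / mB) * (1 / bC + u0 / mC) <>
  (1 / aC + phi' aB bB mB P u0 / mC) * (1 / bB + u0 / mB).
Proof.
  intros haB hbB hmB haC hbC hmC hP hac hbc hu0 hu0a heq.
  set (sB := fun u => 1 / bB + u / mB).
  set (sC := fun u => 1 / bC + u / mC).
  assert (hsB : forall u, 0 <= u -> 0 < sB u).
  { intros u hu. unfold sB. apply Rplus_lt_le_0_compat. apply Rdiv_lt_0_compat; lra.
    apply Rmult_le_pos; [lra| apply Rlt_le, inv_pos; lra]. }
  assert (hsC : forall u, 0 <= u -> 0 < sC u).
  { intros u hu. unfold sC. apply Rplus_lt_le_0_compat. apply Rdiv_lt_0_compat; lra.
    apply Rmult_le_pos; [lra| apply Rlt_le, inv_pos; lra]. }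
  set (K := fun u => (P - u / aC) * sB u - (P - u / aB) * sC u).
  assert (hdiff : forall u, 0 <= u -> phi' aC bC mC P u - phi' aB bB mB P u = K u / (sB u * sC u)).
  { intros u hu. pose proof (hsB u hu). pose proof (hsC u hu). unfold phi', K.
    fold (sB u) (sC u). field. lra. }
  assert (hK0 : K u0 = 0).
  { pose proof (hdiff u0 hu0). rewrite heq in H. unfold Rminus in H. rewrite Rplus_opp_r in H.
    pose proof (hsB u0 hu0). pose proof (hsC u0 hu0).
    assert (K u0 = 0 * (sB u0 * sC u0)) by (rewrite H; field; lra). lra. }
  set (k2 := - (1/aC) * (1/mB) + (1/aB) * (1/mC)).
  set (k1 := P/mB - 1/(aC*bB) - P/mC + 1/(aB*bC)).
  set (L := fun u => k1 + k2 * (u + u0)).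
  assert (hKL : forall u, K u - K u0 = (u - u0) * L u).
  { intros u. unfold K, L, sB, sC, k1, k2. field. repeat split; lra. }
  assert (hKz : K 0 < 0).
  { unfold K, sB, sC. assert (/ bB < / bC) by (apply Rinv_lt_contravar; nra).
    unfold Rdiv. rewrite !Rmult_0_l, !Rminus_0_r, !Rplus_0_r. nra. }
  assert (hKP : 0 < K (P * aB)).
  { unfold K. assert (P * aB / aB = P) by (field; lra). rewrite H.
    assert (P * aB / aC < P).
    { apply (Rmult_lt_reg_r aC); auto. replace (P*aB/aC*aC) with (P*aB) by (field; lra). nra. }
    pose proof (hsB (P*aB) ltac:(nra)). rewrite Rminus_diag, Rmult_0_l, Rminus_0_r.
    apply Rmult_lt_0_compat; lra. }
  pose proof (hKL 0) as e0. pose proof (hKL (P*aB)) as e1. rewrite hK0 in e0, e1.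
  assert (hL0 : 0 < u0 /\ 0 < L 0).
  { assert (u0 * L 0 > 0) by lra. clearbody L. destruct hu0. split; auto.
    destruct (Rle_or_lt (L 0) 0); auto. nra. subst. lra. }
  assert (hL1 : u0 < P * aB /\ 0 < L (P * aB)).
  { assert ((P*aB - u0) * L (P*aB) > 0) by lra. clearbody L. destruct hu0a. split; auto.
    destruct (Rle_or_lt (L (P*aB)) 0); auto. nra. subst. lra. }
  assert (hLpos : forall u, 0 <= u -> u <= P * aB -> 0 < L u).
  { intros u hu hu'. assert (L u * (P * aB) = (P*aB - u) * L 0 + u * L (P*aB)) by (unfold L; ring).
    assert (0 < (P*aB - u) * L 0 + u * L (P*aB)).
    { destruct hu'. assert (0 < (P*aB - u) * L 0) by (apply Rmult_lt_0_compat; lra).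
      assert (0 <= u * L (P*aB)) by (apply Rmult_le_pos; lra). lra.
      subst. assert (0 < P*aB * L (P*aB)) by (apply Rmult_lt_0_compat; lra). lra. }
    assert (0 < P * aB) by lra.
    destruct (Rle_or_lt (L u) 0); auto. assert (L u * (P*aB) <= 0) by nra. lra. }
  split; [lra|]. split; [lra|]. split; [|split].
  - intros u hu hu'. pose proof (hdiff u hu). pose proof (hKL u). rewrite hK0 in H0.
    pose proof (hLpos u hu ltac:(lra)). pose proof (hsB u hu). pose proof (hsC u hu).
    assert (K u < 0) by nra.
    assert (K u / (sB u * sC u) < 0).
    { unfold Rdiv. apply Rmult_neg_pos; auto. apply inv_pos; nra. }
    lra.
  - intros u hu hu'. assert (0 <= u) by lra. pose proof (hdiff u H). pose proof (hKL u). rewrite hK0 in H1.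
    pose proof (hLpos u H hu'). pose proof (hsB u H). pose proof (hsC u H).
    assert (0 < K u) by nra.
    assert (0 < K u / (sB u * sC u)).
    { unfold Rdiv. apply Rmult_lt_0_compat; auto. apply inv_pos; nra. }
    lra.
  - set (v0 := phi' aB bB mB P u0).
    assert (hB : v0 * sB u0 = P - u0 / aB).
    { unfold v0, phi'. fold (sB u0). pose proof (hsB u0 hu0). field. lra. }
    assert (hC : v0 * sC u0 = P - u0 / aC).
    { unfold v0. rewrite heq. unfold phi'. fold (sC u0). pose proof (hsC u0 hu0). field. lra. }
    assert (hX : (1 / aB + v0 / mB) * sC u0 - (1 / aC + v0 / mC) * sB u0 =
              sC u0 / aB - sB u0 / aC + (v0 * sC u0) / mB - (v0 * sB u0) / mC).
    { field. repeat split; lra. }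
    rewrite hB, hC in hX.
    assert (hX2 : (1 / aB + v0 / mB) * sC u0 - (1 / aC + v0 / mC) * sB u0 = L u0).
    { rewrite hX. unfold L, sB, sC, k1, k2. field. repeat split; lra. }
    pose proof (hLpos u0 hu0 hu0a). intro hc. unfold sB, sC in hX2. rewrite hc in hX2. lra.
Qed.

Module Crit.
From Coquelicot Require Import Coquelicot.

Lemma crit a b m P w1 w2 u0 :
  0 < a -> 0 < b -> 0 < m -> 0 < P -> 0 < u0 -> u0 < P * a ->
  (forall u, 0 < u -> u < P * a ->
     w1 * ln (1 + u) + w2 * ln (1 + phi' a b m P u) <=
     w1 * ln (1 + u0) + w2 * ln (1 + phi' a b m P u0)) ->
  w1 * ((1 + phi' a b m P u0) * (1 / b + u0 / m)) =
  w2 * (1 / a + phi' a b m P u0 / m) * (1 + u0).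
Proof.
  intros ha hb hm hP hu0 hu0a hmax.
  set (s0 := 1 / b + u0 / m).
  assert (hs0 : 0 < s0).
  { unfold s0. apply Rplus_lt_le_0_compat. apply Rdiv_lt_0_compat; lra.
    apply Rmult_le_pos; [lra| apply Rlt_le, inv_pos; lra]. }
  set (v0 := phi' a b m P u0).
  assert (hv0 : v0 * s0 = P - u0 / a) by (unfold v0, phi'; fold s0; field; lra).
  assert (hv0p : 0 < v0).
  { assert (u0 / a < P). { apply (Rmult_lt_reg_r a); auto. replace (u0/a*a) with u0 by (field; lra). lra. }
    nra. }
  set (l := w1 / (1 + u0) - w2 * ((1/a + v0/m) / s0) / (1 + v0)).
  assert (Hd : is_derive (fun u => w1 * ln (1 + u) + w2 * ln (1 + phi' a b m P u)) u0 l).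
  { unfold phi'. auto_derive.
    - change (1 / b + u0 * / m) with s0. change ((P + - (u0 * / a)) * / s0) with v0.
      split; [lra|split;[lra|split;[lra|exact I]]].
    - change (1 / b + u0 * / m) with s0. change ((P + - (u0 * / a)) * / s0) with v0.
      change (P + - (u0 * / a)) with (P - u0 / a). rewrite <- hv0.
      unfold l. field. repeat split; lra. }
  apply is_derive_Reals in Hd.
  pose proof (deriv_maximum _ 0 (P * a) u0 (exist _ l Hd) hu0 hu0a) as H0.
  simpl in H0.
  assert (l = 0).
  { apply H0. intros x hx hx'. apply hmax; auto. }
  unfold l in H. fold v0 s0.
  assert (w1 / (1 + u0) * ((1+u0) * s0 * (1 + v0)) = w2 * ((1 / a + v0 / m) / s0) / (1 + v0) * ((1+u0) * s0 * (1 + v0))).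
  { f_equal. lra. }
  replace (w1 / (1 + u0) * ((1+u0) * s0 * (1 + v0))) with (w1 * ((1 + v0) * s0)) in H1 by (field; lra).
  rewrite H1. field. lra.
Qed.

End Crit.
Import Crit.

Lemma phi_phi' a b P u : phi a b P u = phi' a b (Rmax a b) P u.
Proof. reflexivity. Qed.

Lemma phi_0 a b P : 0 < b -> phi a b P 0 = P * b.
Proof. intros. unfold phi. unfold Rdiv. rewrite !Rmult_0_l, Rminus_0_r, Rplus_0_r.
  field. lra. Qed.

Lemma bd a b P r1 r2 : 0 < a -> 0 < b ->
  Reg a b P r1 r2 -> (forall r2', Reg a b P r1 r2' -> r2' <= r2) ->
  0 <= E r1 /\ E r1 <= P * a /\ E r2 = phi a b P (E r1).
Proof.
  intros ha hb hr hm. destruct (nec a b P r1 r2 ha hb hr) as [h1 [h2 [h3 h4]]].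
  pose proof (E_nonneg _ h1).
  split; auto. split; auto.
  pose proof (suf a b P (E r1) ha hb H h4) as hs. rewrite log2_E in hs.
  apply hm in hs. apply E_le in hs. rewrite E_log2 in hs.
  lra. pose proof (phi_nonneg a b P (E r1) ha hb H h4). lra.
Qed.

Lemma log2_ineq w1 w2 x1 y1 x2 y2 :
  w1 * log2 x1 + w2 * log2 y1 <= w1 * log2 x2 + w2 * log2 y2 ->
  w1 * ln x1 + w2 * ln y1 <= w1 * ln x2 + w2 * ln y2.
Proof. unfold log2. intro h. pose proof ln2_pos.
  apply (Rmult_le_compat_r (ln 2)) in h; [|lra].
  replace ((w1 * (ln x1 / ln 2) + w2 * (ln y1 / ln 2)) * ln 2) with (w1 * ln x1 + w2 * ln y1) in h by (field; lra).
  replace ((w1 * (ln x2 / ln 2) + w2 * (ln y2 / ln 2)) * ln 2) with (w1 * ln x2 + w2 * ln y2) in h by (field; lra).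
  exact h. Qed.

Lemma gain_pos beta0 H xk x : 0 < beta0 -> 0 < H -> 0 < gain beta0 H xk x.
Proof. intros. unfold gain. apply Rdiv_lt_0_compat; auto. pose proof (pow2_ge_0 (x-xk)). pose proof (pow_lt H 2 H1). lra. Qed.

Lemma gain_lt beta0 H xk x x' : 0 < beta0 -> 0 < H -> (x - xk)^2 < (x' - xk)^2 ->
  gain beta0 H xk x' < gain beta0 H xk x.
Proof. intros. unfold gain. unfold Rdiv. apply Rmult_lt_compat_l; auto.
  pose proof (pow2_ge_0 (x-xk)). pose proof (pow_lt H 2 H1).
  apply Rinv_lt_contravar. apply Rmult_lt_0_compat; lra. lra. Qed.

Theorem lemma7 (D H beta0 P xB xC : R)
  (hD : 0 < D) (hH : 0 < H) (hbeta0 : 0 < beta0) (hP : 0 < P)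
  (hxC : - D / 2 <= xC) (hCB : xC < xB) (hxB : xB <= D / 2)
  (r1BC r2BC : R)
  (hBC_B : boundary_pt D H beta0 P xB r1BC r2BC)
  (hBC_C : boundary_pt D H beta0 P xC r1BC r2BC)
  (hBC_uniq : forall s1 s2, boundary_pt D H beta0 P xB s1 s2 ->
                boundary_pt D H beta0 P xC s1 s2 -> s1 = r1BC)
  (w1 w2 c : R) (hw1 : 0 <= w1) (hw2 : 0 <= w2) (hw : 0 < w1 + w2)
  (hsuppB : forall r1 r2, C_f D H beta0 P xB r1 r2 -> w1 * r1 + w2 * r2 <= c)
  (hsuppC : forall r1 r2, C_f D H beta0 P xC r1 r2 -> w1 * r1 + w2 * r2 <= c)
  (r1B r2B r1C r2C : R)
  (hB : C_f D H beta0 P xB r1B r2B) (hBl : w1 * r1B + w2 * r2B = c)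
  (hC : C_f D H beta0 P xC r1C r2C) (hCl : w1 * r1C + w2 * r2C = c) :
  (0 <= r1B /\ r1B < r1BC /\ r1BC < r1C) /\
  (0 <= r2C /\ r2C < r2BC /\ r2BC < r2B).
Proof.
  set (aB := h1 D H beta0 xB) in *. set (bB := h2 D H beta0 xB) in *.
  set (aC := h1 D H beta0 xC) in *. set (bC := h2 D H beta0 xC) in *.
  assert (haB : 0 < aB) by (apply gain_pos; auto).
  assert (hbB : 0 < bB) by (apply gain_pos; auto).
  assert (haC : 0 < aC) by (apply gain_pos; auto).
  assert (hbC : 0 < bC) by (apply gain_pos; auto).
  assert (hac : aB < aC).
  { apply gain_lt; auto. assert (0 <= xC - - D / 2) by lra. assert (xC - - D/2 < xB - - D/2) by lra. nra. }
  assert (hbc : bC < bB).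
  { apply gain_lt; auto. assert (0 <= D / 2 - xB) by lra. assert (D/2 - xB < D/2 - xC) by lra. nra. }
  change (Reg aB bB P r1B r2B) in hB. change (Reg aC bC P r1C r2C) in hC.
  assert (sB : forall r1 r2, Reg aB bB P r1 r2 -> w1 * r1 + w2 * r2 <= c) by exact hsuppB.
  assert (sC : forall r1 r2, Reg aC bC P r1 r2 -> w1 * r1 + w2 * r2 <= c) by exact hsuppC.
  clear hsuppB hsuppC hBC_uniq.
  destruct hBC_B as [_ [hP0B hmB]]. destruct hBC_C as [_ [hP0C hmC]].
  change (Reg aB bB P r1BC r2BC) in hP0B. change (Reg aC bC P r1BC r2BC) in hP0C.
  destruct (bd aB bB P r1BC r2BC haB hbB hP0B hmB) as [hu0 [hu0a hv0B]].
  destruct (bd aC bC P r1BC r2BC haC hbC hP0C hmC) as [_ [hu0aC hv0C]].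
  clear hmB hmC.
  destruct (nec _ _ _ _ _ haB hbB hB) as [hr1B [hr2B [hvB huB]]].
  destruct (nec _ _ _ _ _ haC hbC hC) as [hr1C [hr2C [hvC huC]]].
  pose proof (E_nonneg _ hr1B) as huB0. pose proof (E_nonneg _ hr1C) as huC0.
  pose proof (E_nonneg _ hr2B) as hvB0. pose proof (E_nonneg _ hr2C) as hvC0.
  assert (ePaB : P * aB < P * aC) by nra.
  destruct (cross aB bB (Rmax aB bB) aC bC (Rmax aC bC) P (E r1BC)
     haB hbB (Rmax_pos _ _ haB) haC hbC (Rmax_pos _ _ haC) hP hac hbc hu0 hu0a)
    as [hu0p [hu0lt [crL [crR slope]]]].
  { rewrite <- !phi_phi'. congruence. }
  assert (crL' : forall u, 0 <= u -> u < E r1BC -> phi aC bC P u < phi aB bB P u) by exact crL.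
  assert (crR' : forall u, E r1BC < u -> u <= P * aB -> phi aB bB P u < phi aC bC P u) by exact crR.
  clear crL crR. rename crL' into crL. rename crR' into crR.
  rewrite <- !phi_phi' in slope.
  assert (er1B : r1B = log2 (1 + E r1B)) by (rewrite log2_E; auto).
  assert (er2B : r2B = log2 (1 + E r2B)) by (rewrite log2_E; auto).
  assert (er1C : r1C = log2 (1 + E r1C)) by (rewrite log2_E; auto).
  assert (er2C : r2C = log2 (1 + E r2C)) by (rewrite log2_E; auto).
  assert (er1 : r1BC = log2 (1 + E r1BC)) by (rewrite log2_E; auto).
  assert (er2 : r2BC = log2 (1 + E r2BC)) by (rewrite log2_E; auto).
  assert (hw1p : 0 < w1).
  { destruct hw1; auto. subst w1. exfalso.
    pose proof (suf aB bB P 0 haB hbB (Rle_refl 0) ltac:(nra)) as q.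
    apply sB in q. rewrite phi_0 in q by auto.
    assert (phi aC bC P (E r1C) <= phi aC bC P 0).
    { destruct huC0. apply Rlt_le, phi_decr; lra. rewrite <- H0; lra. }
    rewrite phi_0 in H0 by auto.
    assert (log2 (1 + E r2C) < log2 (1 + P * bB)) by (apply log2_lt; nra).
    rewrite <- er2C in H1. nra. }
  assert (hw2p : 0 < w2).
  { destruct hw2; auto. subst w2. exfalso.
    pose proof (suf aC bC P (P * aC) haC hbC ltac:(nra) (Rle_refl _)) as q.
    apply sC in q.
    assert (log2 (1 + E r1B) < log2 (1 + P * aC)) by (apply log2_lt; nra).
    rewrite <- er1B in H0. nra. }
  assert (notOn : w1 * r1BC + w2 * r2BC < c).
  { destruct (sB _ _ hP0B); auto. exfalso.
    assert (eB := crit aB bB (Rmax aB bB) P w1 w2 (E r1BC) haB hbB (Rmax_pos _ _ haB) hP hu0p hu0lt).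
    assert (eC := crit aC bC (Rmax aC bC) P w1 w2 (E r1BC) haC hbC (Rmax_pos _ _ haC) hP hu0p ltac:(lra)).
    rewrite <- !phi_phi' in eB, eC. rewrite <- hv0B in eB. rewrite <- hv0C in eC.
    assert (eB' : w1 * ((1 + E r2BC) * (1 / bB + E r1BC / Rmax aB bB)) =
       w2 * (1 / aB + E r2BC / Rmax aB bB) * (1 + E r1BC)).
    { apply eB. intros u hu hu'. rewrite <- !phi_phi'. apply log2_ineq. rewrite <- er1, <- er2, H0.
      apply sB. apply suf; lra. }
    assert (eC' : w1 * ((1 + E r2BC) * (1 / bC + E r1BC / Rmax aC bC)) =
       w2 * (1 / aC + E r2BC / Rmax aC bC) * (1 + E r1BC)).
    { apply eC. intros u hu hu'. rewrite <- !phi_phi'. apply log2_ineq. rewrite <- er1, <- er2, H0.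
      apply sC. apply suf; lra. }
    clear eB eC. rewrite <- hv0B in slope. apply slope.
    set (XB := 1 / aB + E r2BC / Rmax aB bB) in *.
    set (XC := 1 / aC + E r2BC / Rmax aC bC) in *.
    set (SB := 1 / bB + E r1BC / Rmax aB bB) in *.
    set (SC := 1 / bC + E r1BC / Rmax aC bC) in *.
    assert (0 < w2 * (1 + E r1BC)) by nra.
    apply (Rmult_eq_reg_l (w2 * (1 + E r1BC))); [|lra].
    transitivity (w1 * ((1 + E r2BC) * SB) * SC). rewrite eB'. ring.
    transitivity (w1 * ((1 + E r2BC) * SC) * SB). ring. rewrite eC'. ring. }
  assert (hP0c : w1 * r1BC + w2 * r2BC <= c) by (apply sB; auto).
  assert (hb : r1B < r1BC).
  { apply E_lt_rev. destruct (Rlt_or_le (E r1B) (E r1BC)) as [|hle]; auto. exfalso.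
    destruct hle as [hlt|heq].
    - pose proof (crR (E r1B) hlt huB).
      pose proof (suf aC bC P (E r1B) haC hbC huB0 ltac:(lra)) as q. apply sC in q.
      rewrite <- er1B in q.
      assert (log2 (1 + E r2B) < log2 (1 + phi aC bC P (E r1B))) by (apply log2_lt; lra).
      rewrite <- er2B in H1. nra.
    - assert (r1BC = r1B) by (apply Rle_antisym; apply E_le_rev; lra).
      assert (r2B <= r2BC) by (apply E_le_rev; rewrite hv0B, heq; lra).
      subst r1BC. nra. }
  assert (hc : r1BC < r1C).
  { apply E_lt_rev. destruct (Rlt_or_le (E r1BC) (E r1C)) as [|hle]; auto. exfalso.
    destruct hle as [hlt|heq].
    - pose proof (crL (E r1C) huC0 hlt).
      pose proof (suf aB bB P (E r1C) haB hbB huC0 ltac:(lra)) as q. apply sB in q.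
      rewrite <- er1C in q.
      assert (log2 (1 + E r2C) < log2 (1 + phi aB bB P (E r1C))) by (apply log2_lt; lra).
      rewrite <- er2C in H1. nra.
    - assert (r1BC = r1C) by (apply Rle_antisym; apply E_le_rev; lra).
      assert (r2C <= r2BC) by (apply E_le_rev; rewrite hv0C, <- heq; lra).
      subst r1BC. nra. }
  assert (he : r2C < r2BC).
  { apply E_lt_rev. rewrite hv0C.
    pose proof (phi_decr aC bC P (E r1BC) (E r1C) ltac:(lra) haC hbC hu0 (E_lt _ _ hc)). lra. }
  split; split; auto; split; auto; nra.
Qed.
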